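(* Let $T_{de}:l_\infty\to l_\infty$ be $T_{de}(x)=(0,x_0,x_1,\dots)$ with adjoint $T_{de}^*$. Then $$\Delta(T_{de}^* )=\mathcal B\cup\{(1-\delta)(1,\delta,\delta^2,\dots):\delta\in[0,1)\},$$ where for $\delta=0$ the sequence is $(1,0,0,\dots)$.
   Context: $l_\infty$: real bounded sequences indexed by $\mathbb N$. $ba(\mathbb N)$: norm dual of $l_\infty$, pairing $\langle x,\mu\rangle$. Adjoint: $\langle x,T^*(\mu)\rangle=\langle T(x),\mu\rangle$. $\Delta$: finitely additive probability measures on $2^{\mathbb N}$; a sequence $(p_n)$ with $p_n\ge0$, $\sum p_n=1$ is identified with the countably additive measure it defines. $\Delta(T^* )$: elements of $\Delta$ that are eigenvectors of $T^*$ (nonzero $\mu$ with $T^*\mu=\lambda\mu$, $\lambda\in\mathbb R$). $\mathcal B$: the set of Banach–Mazur limits, i.e. $\mu\in\Delta$ with $\langle x,\mu\rangle=\langle(x_1,x_2,\dots),\mu\rangle$ for all $x\in l_\infty$. *)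

(* Defs.v *)
From Stdlib Require Import Reals.
Open Scope R_scope.

Definition bounded (x : nat -> R) : Prop :=
  exists C : R, forall n : nat, Rabs (x n) <= C.

(* An element of ba(N) = (l_infty)^*: a bounded linear functional on l_infty.
   Functionals are given as maps (nat -> R) -> R; only their values on
   bounded sequences matter. *)
Definition is_dual (mu : (nat -> R) -> R) : Prop :=
  (forall (a b : R) (x y : nat -> R), bounded x -> bounded y ->
     mu (fun n => a * x n + b * y n) = a * mu x + b * mu y) /\
  (exists C : R, forall x : nat -> R, bounded x ->
     forall M : R, (forall n, Rabs (x n) <= M) -> Rabs (mu x) <= C * M).

Definition indic (A : nat -> bool) : nat -> R :=
  fun n => if A n then 1 else 0.

(* Delta : finitely additive probability measures on 2^N, viewed in ba(N)
   via mu(A) = <1_A, mu>: nonnegative on sets and total mass 1. *)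
Definition in_Delta (mu : (nat -> R) -> R) : Prop :=
  is_dual mu /\
  (forall A : nat -> bool, 0 <= mu (indic A)) /\
  mu (fun _ => 1) = 1.

Definition adjoint (T : (nat -> R) -> (nat -> R)) (mu : (nat -> R) -> R)
  : (nat -> R) -> R := fun x => mu (T x).

Definition eigvec_adj (T : (nat -> R) -> (nat -> R)) (mu : (nat -> R) -> R) : Prop :=
  (exists x : nat -> R, bounded x /\ mu x <> 0) /\
  exists lambda : R, forall x : nat -> R, bounded x ->
    adjoint T mu x = lambda * mu x.

Definition in_Delta_adj (T : (nat -> R) -> (nat -> R)) (mu : (nat -> R) -> R) : Prop :=
  in_Delta mu /\ eigvec_adj T mu.

Definition T_de (x : nat -> R) : nat -> R :=
  fun n => match n with O => 0 | S m => x m end.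

Definition is_BM_limit (mu : (nat -> R) -> R) : Prop :=
  in_Delta mu /\
  forall x : nat -> R, bounded x -> mu x = mu (fun n => x (S n)).

(* The countably additive measure given by the sequence (1-d)(1,d,d^2,...):
   <x,mu> = sum_n (1-d) d^n x_n  (with 0^0 = 1). *)
Definition is_geom_measure (d : R) (mu : (nat -> R) -> R) : Prop :=
  forall x : nat -> R, bounded x ->
    infinite_sum (fun n => (1 - d) * d ^ n * x n) (mu x).

(* Main.v *)
Require Import Defs.
From Stdlib Require Import Reals.
From Stdlib Require Import Lra Lia FunctionalExtensionality.
Open Scope R_scope.

Lemma sum_shift_eq (h g : nat -> R) (d : R) :
  h 0%nat = 0 -> (forall n, h (S n) = d * g n) ->
  forall m, sum_f_R0 h (S m) = d * sum_f_R0 g m.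
Proof.
  intros H0 HS m.
  rewrite decomp_sum by lia. simpl pred. rewrite H0, Rplus_0_l, scal_sum.
  apply sum_eq. intros i _. rewrite HS. ring.
Qed.

Lemma inf_sum_shift (h g : nat -> R) (d l : R) :
  h 0%nat = 0 -> (forall n, h (S n) = d * g n) ->
  infinite_sum g l -> infinite_sum h (d * l).
Proof.
  intros H0 HS Hg eps Heps.
  assert (Hp : eps / (Rabs d + 1) > 0).
  { apply Rdiv_lt_0_compat; [lra| pose proof (Rabs_pos d); lra]. }
  destruct (Hg _ Hp) as [N HN].
  exists (S N). intros n Hn. destruct n as [|m]; [lia|].
  rewrite (sum_shift_eq h g d H0 HS). unfold Rdist.
  replace (d * sum_f_R0 g m - d * l) with (d * (sum_f_R0 g m - l)) by ring.
  rewrite Rabs_mult.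
  specialize (HN m ltac:(lia)). unfold Rdist in HN.
  apply Rmult_lt_compat_l with (r := Rabs d + 1) in HN;
    [| pose proof (Rabs_pos d); lra].
  replace ((Rabs d + 1) * (eps / (Rabs d + 1))) with eps in HN
    by (field; pose proof (Rabs_pos d); lra).
  pose proof (Rabs_pos d). pose proof (Rabs_pos (sum_f_R0 g m - l)). nra.
Qed.

Definition ee0 : nat -> R := indic (fun n => Nat.eqb n 0).

Lemma bounded_e0 : Defs.bounded ee0.
Proof. exists 1. intro n; unfold ee0, indic. destruct (Nat.eqb n 0);
  rewrite ?Rabs_R1, ?Rabs_R0; lra. Qed.

Lemma bounded_S x : Defs.bounded x -> Defs.bounded (fun n => x (S n)).
Proof. intros [C HC]; exists C; intro n; apply HC. Qed.

Lemma bounded_T x : Defs.bounded x -> Defs.bounded (T_de x).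
Proof. intros [C HC]; exists C; intro n. destruct n; simpl.
  - specialize (HC 0%nat). pose proof (Rabs_pos (x 0%nat)). rewrite Rabs_R0; lra.
  - apply HC. Qed.

Lemma bounded_cst : Defs.bounded (fun _ => 1).
Proof. exists 1. intro; rewrite Rabs_R1; lra. Qed.

Lemma decomp_x x : x = fun n => 1 * T_de (fun m => x (S m)) n + x 0%nat * ee0 n.
Proof.
  apply functional_extensionality; intro n; destruct n; unfold ee0, indic; simpl; ring.
Qed.

Theorem mainTheorem15 :
  forall mu : (nat -> R) -> R,
    in_Delta_adj T_de mu <->
    (is_BM_limit mu \/
     exists d : R, 0 <= d < 1 /\ in_Delta mu /\ is_geom_measure d mu).
Proof.
  intro mu; split.
  - intros [HD [_ [lam Hlam]]].
    pose proof HD as [[Hlin [C HC]] [Hpos H1]].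
    unfold adjoint in Hlam.
    assert (L : forall x, Defs.bounded x ->
               mu x = mu ee0 * x 0%nat + lam * mu (fun n => x (S n))).
    { intros x Hx. rewrite (decomp_x x) at 1.
      rewrite Hlin by (apply bounded_T, bounded_S, Hx || apply bounded_e0).
      rewrite Hlam by (apply bounded_S, Hx). ring. }
    assert (Hl : lam = 1 - mu ee0).
    { pose proof (L _ bounded_cst) as E. cbv beta in E. rewrite H1 in E. lra. }
    assert (Hc : 0 <= mu ee0) by apply Hpos.
    assert (Hlp : 0 <= lam).
    { rewrite <- (Rmult_1_r lam), <- H1, <- Hlam by apply bounded_cst.
      replace (T_de (fun _ => 1)) with (indic (fun n => match n with O => false | S _ => true end)).
      apply Hpos. apply functional_extensionality; intro n; destruct n; reflexivity. }
    destruct (Req_dec (mu ee0) 0) as [Hz|Hnz].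
    + left. split; [exact HD|]. intros x Hx. rewrite (L x Hx), Hz, Hl, Hz. ring.
    + right. exists lam. split; [lra|]. split; [exact HD|].
      intros x Hx.
      set (f := fun y : nat -> R => fun n => (1 - lam) * lam ^ n * y n).
      assert (P : forall N x, Defs.bounded x ->
        mu x = sum_f_R0 (f x) N + lam ^ (S N) * mu (fun n => x (S N + n)%nat)).
      { induction N as [|N IH]; intros y Hy.
        - simpl. rewrite (L y Hy). unfold f; simpl. rewrite Hl. ring.
        - rewrite (L y Hy). rewrite (IH _ (bounded_S y Hy)).
          assert (E : sum_f_R0 (f y) (S N) = f y 0%nat + lam * sum_f_R0 (f (fun n => y (S n))) N).
          { rewrite decomp_sum by lia. simpl pred. f_equal.
            rewrite scal_sum. apply sum_eq. intros i _. unfold f. simpl. ring. }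
          rewrite E. unfold f. simpl. rewrite Hl. ring. }
      destruct Hx as [M HM].
      intros eps Heps.
      assert (HK : 0 < Rabs C * Rabs M + 1).
      { pose proof (Rabs_pos C); pose proof (Rabs_pos M); nra. }
      destruct (pow_lt_1_zero lam ltac:(rewrite Rabs_right; lra)
                  (eps / (Rabs C * Rabs M + 1)) ltac:(apply Rdiv_lt_0_compat; lra))
        as [N HN].
      exists N. intros n Hn.
      unfold Rdist. change (Rabs (sum_f_R0 (f x) n - mu x) < eps). rewrite (P n x ltac:(exists M; exact HM)).
      replace (sum_f_R0 (f x) n -
               (sum_f_R0 (f x) n + lam ^ S n * mu (fun k => x (S n + k)%nat)))
        with (- (lam ^ S n * mu (fun k => x (S n + k)%nat))) by ring.
      rewrite Rabs_Ropp, Rabs_mult.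
      assert (B : Rabs (mu (fun k => x (S n + k)%nat)) <= Rabs C * Rabs M).
      { eapply Rle_trans. apply (HC _ (ex_intro _ M (fun k => HM _)) M (fun k => HM _)).
        rewrite <- Rabs_mult. apply Rle_abs. }
      assert (Hp : Rabs (lam ^ S n) < eps / (Rabs C * Rabs M + 1)) by (apply HN; lia).
      assert (Hq : Rabs (lam ^ S n) * (Rabs C * Rabs M + 1) < eps).
      { apply Rmult_lt_compat_r with (r := Rabs C * Rabs M + 1) in Hp; [|lra].
        unfold Rdiv in Hp. rewrite Rmult_assoc, Rinv_l in Hp by lra. lra. }
      pose proof (Rabs_pos (lam ^ S n)).
      pose proof (Rabs_pos (mu (fun k => x (S n + k)%nat))). nra.
  - intros H. split.
    + destruct H as [[HD _]|[d [_ [HD _]]]]; exact HD.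
    + split.
      * exists (fun _ => 1). split; [apply bounded_cst|].
        destruct H as [[[_ [_ H1]] _]|[d [_ [[_ [_ H1]] _]]]]; rewrite H1; lra.
      * destruct H as [[HD HBM]|[d [Hd [HD HG]]]].
        -- exists 1. intros x Hx. unfold adjoint.
           rewrite (HBM _ (bounded_T x Hx)). rewrite Rmult_1_l; reflexivity.
        -- exists d. intros x Hx. unfold adjoint.
           apply (uniqueness_sum (fun n => (1 - d) * d ^ n * T_de x n)).
           ++ apply HG, bounded_T, Hx.
           ++ apply inf_sum_shift with (g := fun n => (1 - d) * d ^ n * x n).
              ** simpl; ring.
              ** intro n; simpl; ring.
              ** apply HG, Hx.
Qed.
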